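(* Let $\varepsilon$ be a real random variable with distribution $\mu_\varepsilon$, and suppose there are $z_0\in\mathbb{R}$ and $t>0$ such that $P(\varepsilon\in\{z_0+tz:z\in\mathbb{N}_0\})=1$ and $F_\varepsilon\{z_0\}>0$. Let $\lambda_{z_0}:=(F_\varepsilon\{z_0\})^{-1}$ and $\ddot u_{\varepsilon,+}(z):=\delta_{z,0}-\lambda_{z_0}F_\varepsilon\{z_0+tz\}$ for $z\in\mathbb{Z}$. Let $A\in\mathcal{B}(\mathbb{R})$ and $m_{t,A}:=\max\{a: a\in\mathbb{Z}\cap t^{-1}A\}$ (with $m_{t,A}:=-\infty$ if $\mathbb{Z}\cap t^{-1}A=\emptyset$), and suppose $m_{t,A}<\infty$. Then $$\sup_{m\in\mathbb{N}_0}|\Pi\{\delta_{\{-z_0\}}\}|(A,m)<\infty,$$ and for each fixed $m_0\in\mathbb{N}_0$ with $m_0\ge m_{t,A}$, $$\lim_{m\to\infty}\Pi\{\delta_{\{-z_0\}}\}(A,m)=\lambda_{z_0}\,\Pi\{\lambda_{z_0}\delta_{\{-z_0\}}\}(A,m_0)=\lambda_{z_0}\sum_{z=0}^\infty\gamma\{\ddot u_{\varepsilon,+}\}(z)\,\delta_{\{tz\}}(A).$$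
   Context: $F_\varepsilon\{x\}:=P(\varepsilon=x)$. $\delta_{\{x\}}$ is the Dirac measure at $x$ and $\delta_{z,0}=1$ if $z=0$, else $0$. For finite complex Borel measures $\mu,\nu$ on $\mathbb{R}$, $(\mu*\nu)(B):=\int\int\mathbf 1_B(x+y)\nu(dx)\mu(dy)$; $\mu^{*0}:=\delta_{\{0\}}$, $\mu^{*j}:=\mu*\mu^{*(j-1)}$. For a finite complex Borel measure $\eta$ on $\mathbb{R}$, set $\pi_{\eta*\mu_\varepsilon}:=\delta_{\{0\}}-\eta*\mu_\varepsilon$ and $\Pi\{\eta\}(B,m):=\sum_{\ell=0}^m\pi_{\eta*\mu_\varepsilon}^{*\ell}(B)$ for $B\in\mathcal{B}(\mathbb{R})$, $m\in\mathbb{N}_0$; $|\Pi\{\eta\}|(A,m)$ denotes the total variation on $A$ of the complex measure $\Pi\{\eta\}(\cdot,m)$. Discrete convolution powers: $\ddot u^{*0}(z):=\delta_{z,0}$, $\ddot u^{*j}(z):=\sum_{y\in\mathbb{Z}}\ddot u(z-y)\ddot u^{*(j-1)}(y)$; $\gamma\{\ddot u\}(z):=\sum_{j=0}^{z}\ddot u^{*j}(z)$ for $z\in\mathbb{Z}$ (empty sum $=0$). *)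

(* Defs.v *)
From HB Require Import structures.
From mathcomp Require Import all_boot all_order all_algebra.
From mathcomp Require Import all_classical all_reals all_analysis.
Set Implicit Arguments. Unset Strict Implicit. Unset Printing Implicit Defensive.
Import Order.TTheory GRing.Theory Num.Theory.
Import numFieldNormedType.Exports.
Local Open Scope classical_set_scope.
Local Open Scope ring_scope.

Section Defs.
Variable R : realType.

(* Finite (signed) Borel measures on R are represented by their set functions
   [set R -> R]; all measures in the theorem are real-valued. *)

Definition rdirac (x : R) : set R -> R := fun B => \1_B x.

(* Lebesgue integral of a bounded Borel function g against the finite signed
   measure nu, defined as the limit of the integrals of the simple functions
   (k/n) on the level sets {k/n <= g < (k+1)/n}, |k| <= n^2. *)
Definition sint (nu : set R -> R) (g : R -> R) : R :=
  limn (fun n : nat => \sum_(k < (2 * (n * n)).+1)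
    let c := ((k%:R - (n * n)%:R) / n%:R) in
    c * nu [set y | c <= g y < c + n%:R^-1]).

(* (mu * nu)(B) := int int 1_B(x+y) nu(dx) mu(dy) ; the inner integral of an
   indicator is nu {x | x + y \in B}. *)
Definition conv (mu nu : set R -> R) : set R -> R :=
  fun B => sint mu (fun y => nu [set x | B (x + y)]).

Fixpoint convpow (mu : set R -> R) (j : nat) : set R -> R :=
  match j with
  | 0 => rdirac 0
  | j'.+1 => conv mu (convpow mu j')
  end.

Definition piM (eta mu : set R -> R) : set R -> R :=
  fun B => rdirac 0 B - conv eta mu B.

Definition PiM (eta mu : set R -> R) (B : set R) (m : nat) : R :=
  \sum_(l < m.+1) convpow (piM eta mu) l B.

Definition totvar (nu : set R -> R) (A : set R) : \bar R :=
  ereal_sup [set (\sum_(i <oo) (`|nu (F i)|)%:E)%E | F in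
    [set F : nat -> set R | (forall i, measurable (F i)) /\
       trivIset setT F /\ \bigcup_i F i = A]].

Definition zsum (f : int -> R) : R :=
  limn (fun N : nat => \sum_(k < (2 * N).+1) f (k%:Z - N%:Z)).

Fixpoint dconvpow (u : int -> R) (j : nat) : int -> R :=
  match j with
  | 0 => fun z => (z == 0)%:R
  | j'.+1 => fun z => zsum (fun y => u (z - y) * dconvpow u j' y)
  end.

(* gamma{u}(z) := sum_{j=0}^{z} u^{*j}(z)  (empty sum = 0 for z < 0) *)
Definition gammaD (u : int -> R) (z : int) : R :=
  \sum_(j < `|z|%N.+1) if (0 <= z)%R then dconvpow u j z else 0.

End Defs.

(* Main.v *)
Require Import Defs.
Set Warnings "-all".
From HB Require Import structures.
From mathcomp Require Import all_boot all_order all_algebra.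
From mathcomp Require Import all_classical all_reals all_analysis.
From mathcomp Require Import zify ring lra.
Import Order.TTheory GRing.Theory Num.Theory.
Import numFieldNormedType.Exports.
Local Open Scope classical_set_scope.
Local Open Scope ring_scope.
Section Gen.
Variable R : realType.
Implicit Types f g : nat -> R.

Definition ser (f : nat -> R) : R := limn (series f).

Lemma ser_cvg f l : series f @ \oo --> l -> ser f = l.
Proof. by move=> h; apply: cvg_lim. Qed.

Lemma series_fin f N : (forall n, (N <= n)%N -> f n = 0) ->
  series f @ \oo --> \sum_(k < N) f k.
Proof.
move=> h; apply: cvg_near_cst; near=> n.
have Nn : (N <= n)%N by near: n; exists N.
rewrite /series /= (big_cat_nat (leq0n N) Nn) /= big_mkord.
rewrite [X in _ + X]big_nat_cond [X in _ + X]big1 ?addr0 //.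
by move=> i /andP[/andP[Ni _] _]; apply: h.
Unshelve. all: by end_near. Qed.

End Gen.
Arguments ser {R}.
Arguments ser_cvg {R f l}. Arguments series_fin {R f N}.
Section Gen2.
Variable R : realType.

Lemma cvg_sumK K (u : nat -> nat -> R) (l : nat -> R) :
  (forall k, (k < K)%N -> u k @ \oo --> l k) ->
  (fun n => \sum_(k < K) u k n) @ \oo --> \sum_(k < K) l k.
Proof.
elim: K => [|K IH] h.
  under eq_fun do rewrite big_ord0. rewrite big_ord0; exact: cvg_cst.
under eq_fun do rewrite big_ord_recr /=. rewrite big_ord_recr /=.
apply: cvgD; first by apply: IH => k kK; apply: h; apply: ltnW.
exact: h.
Qed.

Lemma ser_sum K (h : nat -> nat -> R) (c : nat -> R) :
  (forall k, cvgn (series (h k))) ->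
  series (fun w => \sum_(k < K) c k * h k w) @ \oo --> \sum_(k < K) c k * ser (h k).
Proof.
move=> hc.
have -> : series (fun w => \sum_(k < K) c k * h k w) =
          (fun n => \sum_(k < K) c k * series (h k) n).
  apply/funext => n; rewrite /series /= exchange_big /=.
  by apply: eq_bigr => k _; rewrite big_distrr.
apply: (@cvg_sumK K (fun k n => c k * series (h k) n) (fun k => c k * ser (h k))) => k _; exact: (cvgM (cvg_cst (c k)) (hc k)).
Qed.

Lemma abs_cvg (a f : nat -> R) (C : R) : 0 <= C -> cvgn (series (fun w => `|a w|)) ->
  (forall w, `|f w| <= C * `|a w|) -> cvgn (series (fun w => `|f w|)) /\ cvgn (series f).
Proof.
move=> C0 sa hf.
have h1 : cvgn (series (fun w => `|f w|)).
  apply: (@series_le_cvg _ _ (fun w => C * `|a w|)) => //.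
  - by move=> w; rewrite mulr_ge0.
  - have -> : (fun w => C * `|a w|) = C *: (fun w => `|a w|) by apply/funext.
    exact: is_cvg_seriesZ.
split => //; exact: normed_cvg.
Qed.

Lemma ser_norm (f : nat -> R) : cvgn (series (fun w => `|f w|)) ->
  `|ser f| <= ser (fun w => `|f w|).
Proof. move=> h; exact: (lim_series_norm h). Qed.

Lemma ser_le (f g : nat -> R) : cvgn (series f) -> cvgn (series g) ->
  (forall n, f n <= g n) -> ser f <= ser g.
Proof. by move=> *; apply: lim_series_le. Qed.

End Gen2.
Section Fin.
Variable R : realType.

Lemma sum_trunc (f : nat -> R) K M : (forall i, (K <= i)%N -> f i = 0) -> (K <= M)%N ->
  \sum_(i < M) f i = \sum_(i < K) f i.
Proof.
move=> h KM; rewrite -!(big_mkord xpredT) (big_cat_nat (leq0n K) KM) /=.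
rewrite [X in _ + X]big_nat_cond [X in _ + X]big1 ?addr0 //.
by move=> i /andP[/andP[Ni _] _]; apply: h.
Qed.

Lemma tri (N : nat) (a b h : nat -> R) : (forall v, (N <= v)%N -> h v = 0) ->
  \sum_(w < N) a w * \sum_(z < N) b z * h (z + w)%N =
  \sum_(v < N) (\sum_(w < v.+1) a w * b (v - w)%N) * h v.
Proof.
move=> hN.
have e1 : forall v : 'I_N, (\sum_(w < v.+1) a w * b (v - w)%N) * h v =
   \sum_(w < N) a w * ((if (w <= v)%N then b (v - w)%N else 0) * h v).
  move=> v; rewrite big_distrl /=.
  rewrite (@sum_trunc (fun w => a w * ((if (w <= v)%N then b (v - w)%N else 0) * h v)) v.+1 N).
  - by apply: eq_bigr => w _; have := ltn_ord w; rewrite ltnS => ->; rewrite mulrA.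
  - by move=> i vi; rewrite leqNgt vi /= mul0r mulr0.
  - exact: ltn_ord.
rewrite (eq_bigr _ (fun v _ => e1 v)) exchange_big /=.
apply: eq_bigr => w _; rewrite -big_distrr /=; congr (_ * _).
rewrite (@sum_trunc (fun z => b z * h (z + w)%N) (N - w) N); last 2 first.
- move=> i hi; rewrite hN ?mulr0 //; have := ltn_ord w; lia.
- exact: leq_subr.
rewrite -(big_mkord xpredT (fun i => b i * h (i + w)%N)) -(big_mkord xpredT (fun i => (if (w <= i)%N then b (i - w)%N else 0) * h i)).
rewrite (big_cat_nat (leq0n w) (ltnW (ltn_ord w))) /=.
rewrite [X in _ = X + _]big_nat_cond [X in _ = X + _]big1 ?add0r; last first.
  by move=> i /andP[/andP[_ iw] _]; rewrite leqNgt iw mul0r.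
have := @big_addn R 0 +%R 0 N w xpredT (fun i => (if (w <= i)%N then b (i - w)%N else 0) * h i).
rewrite add0n => ->.
by apply: eq_bigr => i _; rewrite leq_addl addnK.
Qed.

End Fin.
Section Floor.
Variable R : realType.

Definition cc (n k : nat) : R := ((k%:R - (n * n)%:R) / n%:R).
Definition Gv (n : nat) (v : R) : R :=
  \sum_(k < (2 * (n * n)).+1) cc n k * ((cc n k <= v) && (v < cc n k + n%:R^-1))%:R.

Lemma bk_iff (n k : nat) (v : R) : (0 < n)%N ->
  ((cc n k <= v) && (v < cc n k + n%:R^-1)) =
  (Num.floor (n%:R * v) == k%:Z - (n * n)%:Z).
Proof.
move=> n0; have N0 : (0 : R) < n%:R by rewrite ltr0n.
rewrite floor_eq !intrD !intrN -!pmulrn.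
have -> : cc n k + n%:R^-1 = (k%:R - (n * n)%:R + 1) / n%:R.
  by rewrite /cc [RHS]mulrDl mul1r.
rewrite /cc ler_pdivrMr // ltr_pdivlMr //.
by rewrite [v * _]mulrC.
Qed.

Lemma Gv_approx (n : nat) (v : R) : (0 < n)%N -> `|v| < n%:R ->
  `|Gv n v - v| <= n%:R^-1.
Proof.
move=> n0 vn; have N0 : (0 : R) < n%:R by rewrite ltr0n.
have := vn; rewrite ltr_norml => /andP[h1 h2].
set f := Num.floor (n%:R * v).
have fge : - (n * n)%:Z <= f.
  rewrite /f floor_ge_int intrN -pmulrn natrM; nra.
have flt : f < (n * n)%:Z.
  rewrite /f floor_lt_int -pmulrn natrM; nra.
have k0ge : 0 <= f + (n * n)%:Z by rewrite -lerBlDr sub0r.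
set k0 := absz (f + (n * n)%:Z).
have k0E : k0%:Z = f + (n * n)%:Z by rewrite /k0 abszE ger0_norm.
have k0lt : (k0 < (2 * (n * n)).+1)%N.
  rewrite /k0; lia.
have GvE : Gv n v = (Num.floor (n%:R * v))%:~R / n%:R.
  rewrite /Gv (bigD1 (Ordinal k0lt)) //= big1 ?addr0.
    rewrite bk_iff // -/f k0E addrK eqxx mulr1 /cc.
    congr (_ / _).
    have : (k0%:Z)%:~R = (f + (n * n)%:Z)%:~R :> R by rewrite k0E.
    rewrite intrD -!pmulrn => ->; rewrite addrK //.
  move=> i ne; rewrite bk_iff // -/f.
  case: eqP => [h|]; last by rewrite mulr0.
  exfalso; move/eqP: ne; apply; apply/val_inj => /=.
  lia.
rewrite GvE -/f.
have hf := floor_itv (n%:R * v); rewrite -/f intrD in hf.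
move: hf; set F := f%:~R => hf.
have -> : F / n%:R - v = (F - n%:R * v) * n%:R^-1.
  by field; rewrite pnatr_eq0 -lt0n.
rewrite normrM [X in _ * X]ger0_norm; last by rewrite invr_ge0 ltW.
rewrite -[X in _ <= X]mul1r; apply: ler_wpM2r; first by rewrite invr_ge0 ltW.
rewrite ler_norml; move: hf => /andP[hf1 hf2]; change (1%:~R : R) with (1 : R) in hf2; apply/andP; split; lra.
Qed.
End Floor.
Arguments cc {R}. Arguments Gv {R}.
Section SintL.
Variable R : realType.

Lemma indic_set (P : R -> bool) (z : R) : \1_[set y | P y] z = (P z)%:R :> R.
Proof.
rewrite indicE; case: (boolP (P z)) => h; first by rewrite mem_set.
by rewrite memNset //; apply/negP.
Qed.

Lemma sint_atoms (nu : set R -> R) (g : R -> R) (x a : nat -> R) (B : R) :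
  cvgn (series (fun w => `|a w|)) ->
  (forall y, `|g y| <= B) ->
  (forall c e, nu [set y | c <= g y < c + e] =
     ser (fun w => a w * \1_[set y | c <= g y < c + e] (x w))) ->
  sint nu g = ser (fun w => a w * g (x w)).
Proof.
move=> sa gB hnu.
have B0 : 0 <= B by apply: le_trans (gB 0).
have eqA : sint nu g = limn (fun n => ser (fun w => a w * Gv n (g (x w)))).
  rewrite /sint; congr (limn _); apply/funext => n /=.
  under eq_bigr do rewrite hnu.
  set h := fun (k : nat) w => a w * \1_[set y | cc n k <= g y < cc n k + n%:R^-1] (x w).
  have hc : forall k, cvgn (series (h k)).
    move=> k; apply: (proj2 (@abs_cvg _ a (h k) 1 ler01 sa _)) => w.
    rewrite /h normrM mul1r mulrC; apply: ler_piMl => //.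
    by rewrite indic_set; case: (_ && _); rewrite ?normr1 ?normr0.
  have := @ser_sum _ (2 * (n * n)).+1 h (cc n) hc.
  move/cvg_lim => <- //; congr (limn (series _)); apply/funext => w.
  rewrite /Gv big_distrr /=; apply: eq_bigr => k _.
  by rewrite /h indic_set mulrCA.
rewrite eqA; apply: cvg_lim => //.
have hS : cvgn (series (fun w => a w * g (x w))).
  apply: (proj2 (@abs_cvg _ a _ B B0 sa _)) => w.
  by rewrite normrM mulrC ler_wpM2r.
set Sa := ser (fun w => `|a w|).
have Sa0 : 0 <= Sa.
  rewrite /Sa /ser; apply: limr_ge => //; apply: nearW => n.
  by rewrite /series /=; apply: sumr_ge0.
apply/cvgrPdist_le => e e0.
near=> n.
have nB : B < n%:R by near: n; apply: nbhs_infty_gtr.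
have nS : Sa / e < n%:R by near: n; apply: nbhs_infty_gtr.
have n0 : (0 < n)%N by rewrite -(ltr0n R); apply: le_lt_trans nB.
have N0 : (0 : R) < n%:R by rewrite ltr0n.
have appr : forall w, `|g (x w) - Gv n (g (x w))| <= n%:R^-1.
  move=> w; rewrite distrC; apply: Gv_approx => //; apply: le_lt_trans nB; exact: gB.
have hG : cvgn (series (fun w => a w * Gv n (g (x w)))).
  apply: (proj2 (@abs_cvg _ a _ (B + 1) _ sa _)) => [|w]; first lra.
  rewrite normrM mulrC ler_wpM2r //.
  have := appr w; have := gB (x w).
  move: (g (x w)) (Gv n (g (x w))) => u v hu huv.
  have : `|v| <= `|u| + `|u - v|.
    have ee : u - (u - v) = v by rewrite opprB addrC subrK.
    by have := ler_normB u (u - v); rewrite ee.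
  have : (n%:R : R)^-1 <= 1.
    by rewrite invf_le1 // ler1n.
  lra.
have hD : cvgn (series (fun w => `|a w * (g (x w) - Gv n (g (x w)))|)).
  apply: (proj1 (@abs_cvg _ a _ (n%:R^-1) _ sa _)) => [|w]; first by rewrite invr_ge0 ltW.
  by rewrite normrM mulrC ler_wpM2r.
have -> : ser (fun w => a w * g (x w)) - ser (fun w => a w * Gv n (g (x w))) =
          ser (fun w => a w * (g (x w) - Gv n (g (x w)))).
  rewrite /ser -lim_seriesB //; congr (limn (series _)); apply/funext => w /=.
  by rewrite mulrBr.
apply: le_trans (@ser_norm _ (fun w => a w * (g (x w) - Gv n (g (x w)))) hD) _.
apply: (@le_trans _ _ (ser (fun w => n%:R^-1 * `|a w|))).
  apply: ser_le => //.
    have -> : (fun w => n%:R^-1 * `|a w|) = n%:R^-1 *: (fun w => `|a w|) by apply/funext.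
    exact: is_cvg_seriesZ.
  by move=> w /=; rewrite normrM mulrC ler_wpM2r.
have -> : (fun w => n%:R^-1 * `|a w|) = n%:R^-1 *: (fun w => `|a w|) by apply/funext.
rewrite /ser lim_seriesZ // -/(ser _) -/Sa.
change (n%:R^-1 * Sa <= e).
rewrite ltr_pdivrMr // in nS.
by rewrite mulrC ler_pdivrMr //; apply: ltW; rewrite mulrC.
Unshelve. all: by end_near. Qed.

End SintL.
Section Main.
Variable R : realType.
Variables (mu : set R -> R) (z0 t : R).
Hypothesis t0 : 0 < t.
Definition pt (w : nat) : R := z0 + t * w%:R.
Definition pp (w : nat) : R := mu [set pt w].
Hypothesis mu_rep : forall X, measurable X ->
  series (fun w => pp w * \1_X (pt w)) @ \oo --> mu X.
Hypothesis mu_ge0 : forall X, measurable X -> 0 <= mu X.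
Hypothesis mu_T : mu setT = 1.

Lemma indic_shift (L : set R) (c y : R) : \1_[set x | L (x + c)] y = \1_L (y + c) :> R.
Proof. by []. Qed.

Lemma meas_shift (L : set R) (c : R) : measurable L -> measurable [set x | L (x + c)].
Proof.
move=> mL.
have -> : [set x | L (x + c)] = setT `&` (fun x => x + c) @^-1` L by rewrite setTI.
apply: (measurable_realfun.continuous_measurable_fun _) => //.
by move=> x; apply: continuousD => //; apply: cvg_cst.
Qed.

Lemma pp_ge0 w : 0 <= pp w.
Proof. by apply: mu_ge0; apply: measurable_set1. Qed.

Lemma series_pp : series pp @ \oo --> (1 : R).
Proof.
rewrite -mu_T; have := @mu_rep setT measurableT.
suff -> : series pp = series (fun w => pp w * \1_setT (pt w)) by [].
by apply/funext => n; apply: eq_bigr => w _; rewrite indicT mulr1.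
Qed.

Lemma mu_le1 X : measurable X -> mu X <= 1.
Proof.
move=> mX; rewrite -(cvg_lim _ (mu_rep _ mX)) // -(cvg_lim _ series_pp) //.
apply: ler_lim; [by apply/cvg_ex; eexists; exact: mu_rep _ mX|by apply/cvg_ex; eexists; exact: series_pp|].
apply: nearW => n; apply: ler_sum => w _.
by rewrite -[X in _ <= X]mulr1 ler_wpM2l ?pp_ge0 // indicE; case: (_ \in _); rewrite ?ler01.
Qed.


Definition nn (k : R) (w : nat) : R := (w == 0)%:R - k * pp w.
Definition etaK (k : R) : set R -> R := fun B => k * rdirac (- z0) B.

Lemma series_comb (f g : nat -> R) (c : R) :
  series (fun w => f w + c * g w) = (fun n => series f n + c * series g n).
Proof. by apply/funext => n; rewrite /series /= big_split /= big_distrr. Qed.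

Lemma delta_series (h : nat -> R) :
  series (fun w => (w == 0)%:R * h w) @ \oo --> h 0%N.
Proof.
have := @series_fin _ (fun w => (w == 0)%:R * h w) 1 _.
rewrite big_ord1 /= mul1r; apply => n; case: n => // n _; by rewrite mul0r.
Qed.

Lemma nn_abs k : cvgn (series (fun w => `|nn k w|)).
Proof.
apply: (@series_le_cvg _ _ (fun w => (w == 0)%:R * 1 + `|k| * pp w)).
- by move=> w; exact: normr_ge0.
- by move=> w; rewrite addr_ge0 ?mulr_ge0 ?pp_ge0 //; case: (w == 0).
- move=> w; rewrite /nn mulr1; apply: le_trans (ler_normB _ _) _.
  rewrite normrM (ger0_norm (pp_ge0 w)); apply: lerD => //.
  by case: (w == 0); rewrite ?normr1 ?normr0.
- rewrite series_comb; apply/cvg_ex; eexists; apply: cvgD.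
    exact: delta_series.
  apply: cvgM; [exact: cvg_cst|exact: series_pp].
Qed.

Lemma nu_rep k L : measurable L ->
  series (fun w => nn k w * \1_L (t * w%:R)) @ \oo --> piM (etaK k) mu L.
Proof.
move=> mL.
have cE : Defs.conv (etaK k) mu L = k * mu [set x | L (x + - z0)].
  rewrite /Defs.conv (@sint_atoms _ _ _ (fun _ => - z0) (fun w => k * (w == 0)%:R) 1).
  - apply: ser_cvg; have := @series_fin _ (fun w => k * (w == 0)%:R * mu [set x | L (x + - z0)]) 1 _.
    rewrite big_ord1 /= mulr1; apply => n; case: n => // n _; by rewrite mulr0 mul0r.
  - have := @series_fin _ (fun w => `|k * (w == 0)%:R|) 1 _.
    move=> h; apply/cvg_ex; eexists; apply: h => n; case: n => // n _; by rewrite mulr0 normr0.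
  - move=> y; have my := @meas_shift L y mL.
    by rewrite ger0_norm ?mu_ge0 ?mu_le1.
  - move=> c e; rewrite /etaK /rdirac; apply/esym/ser_cvg.
    have := @series_fin _ (fun w => k * (w == 0)%:R * \1_[set y | c <= mu [set x | L (x + y)] < c + e] (- z0)) 1 _.
    rewrite big_ord1 /= mulr1; apply => n; case: n => // n _; by rewrite mulr0 mul0r.
rewrite /piM cE.
have h2 : series (fun w => pp w * \1_L (t * w%:R)) @ \oo --> mu [set x | L (x + - z0)].
  have := mu_rep _ (@meas_shift L (- z0) mL).
  suff -> : (fun w => pp w * \1_[set x | L (x + - z0)] (pt w)) = (fun w => pp w * \1_L (t * w%:R)) by [].
  by apply/funext => w; rewrite indic_shift /pt addrAC subrr add0r.
have -> : (fun w => nn k w * \1_L (t * w%:R)) =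
   (fun w => (w == 0)%:R * \1_L (t * w%:R) + (- k) * (pp w * \1_L (t * w%:R))).
  by apply/funext => w; rewrite /nn mulrBl mulNr mulrA.
rewrite series_comb /rdirac; apply: cvgD.
  have := delta_series (fun w => \1_L (t * w%:R)); by rewrite mulr0.
rewrite -mulNr; exact: (cvgM (cvg_cst (- k)) h2).
Qed.



Fixpoint EE (k : R) (l : nat) (B : set R) : R :=
  match l with
  | 0 => \1_B 0
  | l'.+1 => ser (fun w => nn k w * EE k l' [set x | B (x + t * w%:R)])
  end.

Definition KK k := ser (fun w => `|nn k w|).

Lemma KK_ge0 k : 0 <= KK k.
Proof.
rewrite /KK /ser; apply: limr_ge => //; first exact: nn_abs.
by apply: nearW => n; rewrite /series /=; apply: sumr_ge0.
Qed.

Lemma EE_bound k l : forall B, `|EE k l B| <= KK k ^+ l.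
Proof.
elim: l => [|l IH] B /=.
  by rewrite expr0 indicE; case: (_ \in _); rewrite ?normr1 ?normr0.
have [h1 h2] := @abs_cvg _ (nn k) (fun w => nn k w * EE k l [set x | B (x + t * w%:R)])
   (KK k ^+ l) (exprn_ge0 _ (KK_ge0 k)) (nn_abs k)
   (fun w => ltac:(by rewrite normrM mulrC ler_wpM2r // IH)).
apply: le_trans (@ser_norm _ (fun w => nn k w * EE k l [set x | B (x + t * w%:R)]) h1) _.
rewrite exprS mulrC /KK.
have -> : KK k ^+ l * ser (fun w => `|nn k w|) = ser ((KK k ^+ l) *: (fun w => `|nn k w|)).
  by rewrite /ser lim_seriesZ //; exact: nn_abs.
apply: ser_le => //.
  by apply: is_cvg_seriesZ; exact: nn_abs.
by move=> w /=; rewrite normrM mulrC ler_wpM2r // IH.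
Qed.

Lemma EE_cvg k l B :
  cvgn (series (fun w => nn k w * EE k l [set x | B (x + t * w%:R)])).
Proof.
have [_ h2] := @abs_cvg _ (nn k) (fun w => nn k w * EE k l [set x | B (x + t * w%:R)])
   (KK k ^+ l) (exprn_ge0 _ (KK_ge0 k)) (nn_abs k)
   (fun w => ltac:(by rewrite normrM mulrC ler_wpM2r // EE_bound)).
exact: h2.
Qed.

Lemma EE_meas k l : forall B : set R, measurable B ->
  measurable_fun setT (fun y : R => EE k l [set x | B (x + y)]).
Proof.
elim: l => [|l IH] B mB /=.
  have -> : (fun y => \1_[set x | B (x + y)] 0 : R) = \1_B.
    by apply/funext => y; rewrite indic_shift add0r.
  exact: measurable_realfun.measurable_indic.
have -> : (fun y : R => ser (fun w => nn k w * EE k l [set x0 | [set x | B (x + y)] (x0 + t * w%:R)])) =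
          (fun y : R => ser (fun w => nn k w * EE k l [set x | B (x + y + t * w%:R)])).
  apply/funext => y; congr ser; apply/funext => w; congr (_ * EE _ _ _).
  by apply/funext => x /=; rewrite addrAC.
apply: (@measurable_realfun.measurable_fun_cvg _ _ _ _
  (fun m (y : R) => series (fun w => nn k w * EE k l [set x | B (x + y + t * w%:R)]) m)).
  move=> m; rewrite /series /=.
  apply: measurable_sum => w.
  apply: measurable_realfun.measurable_funM; first exact: measurable_cst.
  have := IH [set x | B (x + t * w%:R)] (@meas_shift B _ mB).
  suff -> : (fun y => EE k l [set x | B (x + y + t * w%:R)]) =
            (fun y => EE k l [set x | [set x | B (x + t * w%:R)] (x + y)]) by [].
  apply/funext => y; congr (EE _ _ _); apply/funext => x /=; by rewrite addrAC.
move=> y _.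
have := EE_cvg k l [set x | B (x + y)].
suff -> : (fun w => nn k w * EE k l [set x0 | [set x | B (x + y)] (x0 + t * w%:R)]) =
          (fun w => nn k w * EE k l [set x | B (x + y + t * w%:R)]) by [].
apply/funext => w; congr (_ * EE _ _ _); apply/funext => x /=; by rewrite addrAC.
Qed.

Lemma conv_EE k l : forall B : set R, measurable B ->
  convpow (piM (etaK k) mu) l B = EE k l B.
Proof.
elim: l => [|l IH] B mB //=.
rewrite /Defs.conv.
have -> : (fun y => convpow (piM (etaK k) mu) l [set x | B (x + y)]) =
          (fun y => EE k l [set x | B (x + y)]).
  by apply/funext => y; apply: IH; apply: meas_shift.
rewrite (@sint_atoms _ _ _ (fun w => t * w%:R) (nn k) (KK k ^+ l) (nn_abs k)).
- by [].
- by move=> y; apply: EE_bound.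
move=> c e; apply/esym/ser_cvg/nu_rep.
have -> : [set y | c <= EE k l [set x | B (x + y)] < c + e] =
  setT `&` (fun y => EE k l [set x | B (x + y)]) @^-1` [set` `[c, (c + e)[].
  by rewrite setTI; apply/funext => y /=; rewrite in_itv.
by apply: EE_meas => //; exact: measurable_itv.
Qed.

Fixpoint cp (k : R) (l z : nat) : R :=
  match l with
  | 0 => (z == 0)%:R
  | l'.+1 => \sum_(w < z.+1) nn k w * cp k l' (z - w)
  end.

Lemma indic0 (B : set R) y : ~ B y -> \1_B y = 0 :> R.
Proof. by move=> h; rewrite indicE memNset. Qed.

Lemma EE_LB k l : forall (B : set R) N, (forall z : nat, B (t * z%:R) -> (z < N)%N) ->
  EE k l B = \sum_(z < N) cp k l z * \1_B (t * z%:R).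
Proof.
elim: l => [|l IH] B N hB /=.
  case: N hB => [|N] hB.
    by rewrite big_ord0 indic0 // => B0; have := hB 0%N; rewrite mulr0 => /(_ B0).
  rewrite big_ord_recl /= mul1r mulr0 big1 ?addr0 // => i _.
  by rewrite mul0r.
have hz : forall w, (N <= w)%N -> nn k w * EE k l [set x | B (x + t * w%:R)] = 0.
  move=> w Nw; rewrite (IH _ 0%N) ?big_ord0 ?mulr0 // => z /=.
  rewrite -mulrDr -natrD => /hB; lia.
rewrite (ser_cvg (series_fin hz)).
have -> : \sum_(w < N) nn k w * EE k l [set x | B (x + t * w%:R)] =
  \sum_(w < N) nn k w * \sum_(z < N) cp k l z * \1_B (t * (z + w)%N%:R).
  apply: eq_bigr => w _; congr (_ * _); rewrite (IH _ N).
    by apply: eq_bigr => z _; rewrite indic_shift -mulrDr -natrD.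
  by move=> z /=; rewrite -mulrDr -natrD => /hB; lia.
apply: (@tri _ N (nn k) (cp k l) (fun v => \1_B (t * v%:R))).
move=> v Nv; apply: indic0 => /hB; lia.
Qed.

Hypothesis p0_gt0 : 0 < pp 0.
Definition lamz := (pp 0)^-1.

Lemma pp_le1 w : pp w <= 1.
Proof. by apply: mu_le1; apply: measurable_set1. Qed.

Lemma pp_sum_le1 M : \sum_(w < M) pp w <= 1.
Proof.
have hc : cvgn (series pp) by apply/cvg_ex; eexists; exact: series_pp.
have h := @nondecreasing_cvgn_le _ (series pp) (@nondecreasing_series _ pp xpredT 0 (fun n _ _ => pp_ge0 n)) hc M.
by rewrite (cvg_lim _ series_pp) // /series /= big_mkord in h.
Qed.

Lemma lam_ge1 : 1 <= lamz.
Proof. by rewrite /lamz invf_ge1 // pp_le1. Qed.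

Lemma lamp0 : lamz * pp 0 = 1.
Proof. by rewrite /lamz mulVf // gt_eqF. Qed.

Lemma sum_delta (z : nat) (f : nat -> R) : \sum_(w < z.+1) (w == 0)%:R * f w = f 0%N.
Proof. by rewrite big_ord_recl /= mul1r big1 ?addr0 // => i _; rewrite mul0r. Qed.

Lemma cp_bound m : forall z, \sum_(l < m.+1) `|cp 1 l z| <= lamz ^+ z.+1.
Proof.
have l1 := lam_ge1; have lp := lamp0; have p0 := p0_gt0.
have p01 := pp_le1 0.
elim: m => [|m IH] z.
  rewrite big_ord1 /=; apply: le_trans (exprn_ege1 _ l1).
  by case: (z == 0); rewrite ?normr1 ?normr0.
rewrite big_ord_recl /=.
have step : \sum_(i < m.+1) `|cp 1 (bump 0 i) z| <=
    \sum_(w < z.+1) `|nn 1 w| * lamz ^+ (z - w).+1.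
  apply: (@le_trans _ _ (\sum_(i < m.+1) \sum_(w < z.+1) `|nn 1 w| * `|cp 1 i (z - w)|)).
    apply: ler_sum => i _ /=; apply: le_trans (ler_norm_sum _ _ _) _.
    by apply: ler_sum => w _; rewrite normrM.
  rewrite exchange_big /=; apply: ler_sum => w _.
  by rewrite -big_distrr /= ler_wpM2l // IH.
apply: le_trans (lerD (lexx _) step) _.
rewrite big_ord_recl /= subn0.
have n0 : `|nn 1 0| = 1 - pp 0 by rewrite /nn /= mul1r ger0_norm // subr_ge0.
have nS : forall i, `|nn 1 (bump 0 i)| = pp i.+1 by move=> i; rewrite /nn /= mul1r sub0r normrN ger0_norm // pp_ge0.
rewrite n0.
have rest : \sum_(i < z) `|nn 1 (bump 0 i)| * lamz ^+ (z - bump 0 i).+1 <= (1 - pp 0) * lamz ^+ z.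
  apply: (@le_trans _ _ (\sum_(i < z) pp i.+1 * lamz ^+ z)).
    apply: ler_sum => i _; rewrite nS ler_wpM2l ?pp_ge0 //.
    apply: ler_weXn2l => //; have := ltn_ord i; rewrite /bump leq0n add1n; lia.
  rewrite -big_distrl /= ler_wpM2r ?exprn_ge0 //; first by apply: le_trans l1.
  have := pp_sum_le1 z.+1; rewrite big_ord_recl /=; lra.
clear step; case: z rest => [|z] rest.
  rewrite big_ord0 /= normr1 addr0 expr1; nra.
rewrite /= normr0 add0r.
have L1 : 1 <= lamz ^+ z.+1 by apply: exprn_ege1.
rewrite [lamz ^+ z.+2]exprS.
move: rest L1; set L := lamz ^+ z.+1 => rest L1.
have e : lamz * pp 0 * L = L by rewrite lp mul1r.
have pL : 0 <= pp 0 * L by apply: mulr_ge0; [apply: ltW|lra].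
nra.
Qed.

Lemma cp_abs_cvg z : cvgn (series (fun l => `|cp 1 l z|)).
Proof.
apply: nondecreasing_is_cvgn.
  exact: (@nondecreasing_series _ _ xpredT 0 (fun n _ _ => normr_ge0 _)).
exists (lamz ^+ z.+1) => _ [m _ <-].
case: m => [|m]; first by rewrite /series /= big_geq // exprn_ge0 // (le_trans ler01 lam_ge1).
by rewrite /series /= big_mkord; apply: cp_bound.
Qed.

Definition XX z := ser (fun l => cp 1 l z).

Lemma cp_cvg z : series (fun l => cp 1 l z) @ \oo --> XX z.
Proof. exact: (normed_cvg (cp_abs_cvg z)). Qed.

Lemma XX_eq z : XX z = (z == 0)%:R + \sum_(w < z.+1) nn 1 w * XX (z - w).
Proof.
have e : (fun m => series (fun l => cp 1 l z) m.+1) =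
   (fun m => (z == 0)%:R + \sum_(w < z.+1) nn 1 w * series (fun l => cp 1 l (z - w)) m).
  apply/funext => m; rewrite /series /= big_nat_recl //=; congr (_ + _).
  rewrite exchange_big /=; apply: eq_bigr => w _; by rewrite big_distrr.
have h1 : (fun m => series (fun l => cp 1 l z) m.+1) @ \oo --> XX z.
  by rewrite (cvg_shiftS (series (fun l => cp 1 l z))); exact: cp_cvg.
have h2 : (fun m => (z == 0)%:R + \sum_(w < z.+1) nn 1 w * series (fun l => cp 1 l (z - w)) m)
   @ \oo --> (z == 0)%:R + \sum_(w < z.+1) nn 1 w * XX (z - w).
  apply: cvgD; first exact: cvg_cst.
  apply: (@cvg_sumK _ z.+1 (fun w m => nn 1 w * series (fun l => cp 1 l (z - w)) m)
     (fun w => nn 1 w * XX (z - w))) => w _.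
  exact: (cvgM (cvg_cst (nn 1 w)) (cp_cvg (z - w))).
rewrite e in h1; exact: (cvg_unique _ h1 h2).
Qed.

Lemma XX_conv z : \sum_(w < z.+1) pp w * XX (z - w) = (z == 0)%:R.
Proof.
have := XX_eq z.
have -> : \sum_(w < z.+1) nn 1 w * XX (z - w) =
   \sum_(w < z.+1) (w == 0)%:R * XX (z - w) - \sum_(w < z.+1) pp w * XX (z - w).
  by rewrite -sumrB; apply: eq_bigr => w _; rewrite /nn mul1r mulrBl.
rewrite (sum_delta z (fun w => XX (z - w))) subn0 => h.
have : \sum_(w < z.+1) pp w * XX (z - w) = (z == 0)%:R + XX z - XX z by rewrite {2}h; ring.
by rewrite addrK.
Qed.

Lemma nnlam0 : nn lamz 0 = 0.
Proof. by rewrite /nn /= lamp0 subrr. Qed.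

Lemma cplam0 l : forall z, (z < l)%N -> cp lamz l z = 0.
Proof.
elim: l => [|l IH] z //= zl.
apply: big1 => w _.
case: (posnP w) => [->|w0]; first by rewrite nnlam0 mul0r.
rewrite IH ?mulr0 //; have := ltn_ord w; lia.
Qed.

Definition VV z := \sum_(l < z.+1) cp lamz l z.

Lemma VV_trunc z M : (z < M)%N -> \sum_(l < M) cp lamz l z = VV z.
Proof. by move=> zM; rewrite (@sum_trunc _ (fun l => cp lamz l z) z.+1 M) // => i zi; apply: cplam0. Qed.

Lemma VV_conv z : \sum_(w < z.+1) (lamz * pp w) * VV (z - w) = (z == 0)%:R.
Proof.
have h : VV z = (z == 0)%:R + \sum_(w < z.+1) nn lamz w * VV (z - w).
  rewrite /VV big_ord_recl /=; congr (_ + _).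
  under eq_bigr do rewrite /bump /= ?add1n.
  rewrite exchange_big /=; apply: eq_bigr => w _.
  rewrite -big_distrr /=.
  case: (posnP w) => [->|w0]; first by rewrite nnlam0 !mul0r.
  congr (_ * _); apply: VV_trunc; have := ltn_ord w; lia.
have -> : \sum_(w < z.+1) (lamz * pp w) * VV (z - w) =
   \sum_(w < z.+1) (w == 0)%:R * VV (z - w) - \sum_(w < z.+1) nn lamz w * VV (z - w).
  rewrite -sumrB; apply: eq_bigr => w _; rewrite /nn mulrBl; ring.
rewrite (sum_delta z (fun w => VV (z - w))) subn0 {1}h; ring.
Qed.

Lemma conv_uniq (f g : nat -> R) :
  (forall z, \sum_(w < z.+1) pp w * f (z - w)%N = \sum_(w < z.+1) pp w * g (z - w)%N) ->
  forall z, f z = g z.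
Proof.
move=> H; elim/ltn_ind => z IH.
have := H z; rewrite !big_ord_recl /= !subn0.
have -> : \sum_(i < z) pp (bump 0 i) * f (z - bump 0 i)%N =
          \sum_(i < z) pp (bump 0 i) * g (z - bump 0 i)%N.
  apply: eq_bigr => i _; rewrite IH //; have := ltn_ord i; rewrite /bump leq0n add1n; lia.
move/addIr/mulfI; apply; exact: lt0r_neq0.
Qed.

Lemma XX_VV z : XX z = lamz * VV z.
Proof.
move: z; apply: (@conv_uniq XX (fun z => lamz * VV z)) => z; rewrite XX_conv -VV_conv.
by apply: eq_bigr => w _; rewrite mulrCA mulrA.
Qed.

Lemma PiM_LB k (B : set R) N m : measurable B -> (forall z : nat, B (t * z%:R) -> (z < N)%N) ->
  PiM (etaK k) mu B m = \sum_(z < N) (\sum_(l < m.+1) cp k l z) * \1_B (t * z%:R).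
Proof.
move=> mB hB; rewrite /PiM.
under eq_bigr => l _ do rewrite (conv_EE _ _ _ mB) (EE_LB _ _ _ _ hB).
rewrite exchange_big /=; apply: eq_bigr => z _; by rewrite big_distrl.
Qed.

Lemma indic_sum_le1 (F : nat -> set R) (x : R) I : trivIset setT F ->
  \sum_(i < I) \1_(F i) x <= 1 :> R.
Proof.
move=> tF.
have [[i0 Hi0]|none] := pselect (exists i : 'I_I, F i x).
  rewrite (bigD1 i0) //= big1 ?addr0.
    by rewrite indicE mem_set.
  move=> j ne; apply: indic0 => Fj; move/eqP: ne; apply; apply: val_inj => /=.
  by apply: (tF j i0) => //; exists x.
rewrite big1 ?ler01 // => i _; apply: indic0 => Fi; apply: none; by exists i.
Qed.

Lemma totvar_le (nu : set R -> R) (A : set R) (C : R) :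
  (forall F : nat -> set R, (forall i, measurable (F i)) -> trivIset setT F ->
     \bigcup_i F i = A -> forall I, \sum_(i < I) `|nu (F i)| <= C) ->
  (totvar nu A <= C%:E)%E.
Proof.
move=> h; apply: ge_ereal_sup => _ [F [mF [tF UF]] <-].
apply: lime_le; first exact: is_cvg_nneseries.
apply: nearW => I; rewrite sumEFin lee_fin big_mkord; exact: h.
Qed.

Lemma totvar_PiM (A : set R) N m : measurable A -> (forall z : nat, A (t * z%:R) -> (z < N)%N) ->
  (totvar (fun B => PiM (etaK 1) mu B m) A <= (\sum_(z < N) lamz ^+ z.+1)%:E)%E.
Proof.
move=> mA hA; apply: totvar_le => F mF tF UF I.
have sub : forall i x, F i x -> A x by move=> i x Fx; rewrite -UF; exists i.
apply: (@le_trans _ _ (\sum_(i < I) \sum_(z < N) `|\sum_(l < m.+1) cp 1 l z| * \1_(F i) (t * z%:R))).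
  apply: ler_sum => i _; rewrite (@PiM_LB _ _ N _ (mF i)); last first.
    by move=> z /sub; apply: hA.
  apply: le_trans (ler_norm_sum _ _ _) _; apply: ler_sum => z _.
  by rewrite normrM [X in _ * X]ger0_norm // indicE; case: (_ \in _); rewrite ?ler01.
rewrite exchange_big /=; apply: ler_sum => z _.
rewrite -big_distrr /=.
apply: (@le_trans _ _ (`|\sum_(l < m.+1) cp 1 l z| * 1)).
  by apply: ler_wpM2l => //; apply: indic_sum_le1.
rewrite mulr1; apply: le_trans (ler_norm_sum _ _ _) _; exact: cp_bound.
Qed.

Lemma PiM_lim (A : set R) m0 : measurable A ->
  (forall z : nat, A (t * z%:R) -> (z < m0.+1)%N) ->
  (fun m => PiM (etaK 1) mu A m) @ \oo --> lamz * PiM (etaK lamz) mu A m0.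
Proof.
move=> mA hA.
have -> : (fun m => PiM (etaK 1) mu A m) =
  (fun m => \sum_(z < m0.+1) (series (fun l => cp 1 l z) m.+1) * \1_A (t * z%:R)).
  apply/funext => m; rewrite (PiM_LB _ _ _ _ mA hA); apply: eq_bigr => z _.
  by rewrite /series /= big_mkord.
have -> : lamz * PiM (etaK lamz) mu A m0 = \sum_(z < m0.+1) XX z * \1_A (t * z%:R).
  rewrite (PiM_LB _ _ _ _ mA hA) big_distrr; apply: eq_bigr => z _.
  rewrite VV_trunc // XX_VV; exact: mulrA.
apply: (@cvg_sumK _ m0.+1 (fun z m => series (fun l => cp 1 l z) m.+1 * \1_A (t * z%:R))
   (fun z => XX z * \1_A (t * z%:R))) => z _.
apply: cvgMl.
by rewrite (cvg_shiftS (series (fun l => cp 1 l z))); exact: cp_cvg.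
Qed.

Lemma mu_off (x : R) : (forall w, pt w != x) -> mu [set x] = 0.
Proof.
move=> h; rewrite -(cvg_lim _ (mu_rep _ (measurable_set1 x))) //.
apply: ser_cvg; have := @series_fin _ (fun w => pp w * \1_[set x] (pt w)) 0 _.
rewrite big_ord0; apply => n _; rewrite indic0 ?mulr0 // => /= e.
by move/eqP: (h n); apply.
Qed.

Lemma zsum_fin (f : int -> R) (Z : nat) : (forall y : int, (y < 0)%R -> f y = 0) ->
  (forall y : nat, (Z < y)%N -> f y = 0) -> zsum f = \sum_(y < Z.+1) f y.
Proof.
move=> hneg hbig; rewrite /zsum; apply: cvg_lim => //; apply: cvg_near_cst; near=> N.
have ZN : (Z <= N)%N by near: N; exists Z.
rewrite -(big_mkord xpredT (fun k => f (k%:Z - N%:Z))).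
have N2 : (N <= (2 * N).+1)%N by lia.
rewrite (big_cat_nat (leq0n N) N2) /= big_nat_cond big1 ?add0r; last first.
  move=> i /andP[/andP[_ iN] _]; apply: hneg; lia.
have := @big_addn R 0 +%R 0 (2 * N).+1 N xpredT (fun k => f (k%:Z - N%:Z)).
rewrite add0n => ->.
have -> : ((2 * N).+1 - N)%N = N.+1 by lia.
under eq_bigr do rewrite PoszD addrK.
by rewrite big_mkord (@sum_trunc _ (fun y => f y) Z.+1 N.+1).
Unshelve. all: by end_near. Qed.

Lemma dconv_eq (u : int -> R) : (forall z : int, (z < 0)%R -> u z = 0) ->
  (forall w : nat, u w = nn lamz w) ->
  forall j (z : int), dconvpow u j z = if (0 <= z)%R then cp lamz j `|z|%N else 0.
Proof.
move=> hneg hpos; elim => [|j IH] z.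
  by case: z.
rewrite /=.
have -> : (fun y => u (z - y) * dconvpow u j y) =
          (fun y => u (z - y) * (if (0 <= y)%R then cp lamz j `|y|%N else 0)).
  by apply/funext => y; rewrite IH.
case: z => [zz|zz].
  rewrite (@zsum_fin _ zz); first last.
  - by move=> y zy; rewrite hneg ?mul0r //; lia.
  - by move=> y y0; rewrite leNgt y0 /= mulr0.
  rewrite /=.
  have e : forall y : 'I_zz.+1, u (Posz zz - Posz y) = nn lamz (zz - y)%N.
    move=> y; rewrite subzn ?hpos //; have := ltn_ord y; lia.
  under eq_bigr => y _ do rewrite e /=.
  rewrite (reindex_inj rev_ord_inj) /=; apply: eq_bigr => w _.
  rewrite subSS subKn //; last by have := ltn_ord w; lia.
rewrite (@zsum_fin _ 0%N); first last.
- by move=> y zy; rewrite hneg ?mul0r //; lia.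
- by move=> y y0; case: y y0 => // y _; rewrite mulr0.
by rewrite big_ord1 /= hneg ?mul0r.
Qed.

Lemma gamma_VV (u : int -> R) : (forall z : int, (z < 0)%R -> u z = 0) ->
  (forall w : nat, u w = nn lamz w) -> forall zz : nat, gammaD u zz = VV zz.
Proof.
move=> hneg hpos zz; rewrite /gammaD /VV /=; apply: eq_bigr => j _.
by rewrite (dconv_eq _ hneg hpos).
Qed.

Lemma gamma_lim (u : int -> R) (A : set R) m0 :
  (forall z : int, (z < 0)%R -> u z = 0) -> (forall w : nat, u w = nn lamz w) ->
  measurable A -> (forall z : nat, A (t * z%:R) -> (z < m0.+1)%N) ->
  (fun n : nat => lamz * \sum_(z < n) gammaD u z%:Z * rdirac (t * z%:R) A)
     @ \oo --> lamz * PiM (etaK lamz) mu A m0.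
Proof.
move=> hneg hpos mA hA.
apply: cvg_near_cst; near=> n.
have Nn : (m0.+1 <= n)%N by near: n; exists m0.+1.
rewrite (PiM_LB _ _ _ _ mA hA); congr (_ * _).
rewrite (@sum_trunc _ (fun z => gammaD u z%:Z * rdirac (t * z%:R) A) m0.+1 n) //; last first.
  by move=> i mi; rewrite /rdirac indic0 ?mulr0 // => /hA; lia.
apply: eq_bigr => z _; rewrite gamma_VV // VV_trunc //.
Unshelve. all: by end_near. Qed.
End Main.

Section Dist.
Variables (R : realType) (d : measure_display) (T : measurableType d).
Variables (P : probability T R) (eps : {RV P >-> R}) (z0 t : R).
Hypothesis t0 : 0 < t.
Hypothesis hS : distribution P eps [set z0 + t * z%:R | z in [set: nat]] = 1%E.

Local Notation D := (distribution P eps).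

Lemma D_fin X : measurable X -> D X = (fine (D X))%:E.
Proof.
move=> mX; rewrite fineK // ge0_fin_numE ?measure_ge0 //.
apply: (@le_lt_trans _ _ (D setT)); first by apply: le_measure; rewrite ?inE.
by rewrite probability_setT ltry.
Qed.

Lemma dist_rep X : measurable X ->
  series (fun w => fine (D [set z0 + t * w%:R]) * \1_X (z0 + t * w%:R)) @ \oo --> fine (D X).
Proof.
move=> mX.
set S := [set z0 + t * z%:R | z in [set: nat]].
have SE : S = \bigcup_(w in setT) [set z0 + t * w%:R].
  apply/seteqP; split => x.
    by case=> w _ <-; exists w.
  by case=> w _ ->; exists w.
have mS : measurable S by rewrite SE; apply: bigcup_measurable => w _; exact: measurable_set1.
have DSc : D (~` S) = 0%E.
  rewrite probability_setC //.
  transitivity (1%:E - 1%:E : \bar R)%E; last by rewrite subee.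
  by congr (_ - _)%E; exact: hS.
have DXS : D X = D (X `&` S).
  have Z : D (X `&` ~` S) = 0%E.
    apply/eqP; rewrite eq_le measure_ge0 andbT -DSc; apply: le_measure; rewrite ?inE.
    - by apply: measurableI => //; apply: measurableC.
    - exact: measurableC.
    - by apply: subIsetr.
  have mXS : measurable (X `&` S) by apply: measurableI.
  have mXSc : measurable (X `&` ~` S) by apply: measurableI => //; apply: measurableC.
  have disj : (X `&` S) `&` (X `&` ~` S) = set0 by rewrite setIACA setICr setI0.
  have U := measureU D mXS mXSc disj.
  rewrite -setIUr setUCr setIT in U.
  transitivity (D (X `&` S) + D (X `&` ~` S))%E; first exact: U.
  by rewrite Z adde0.
set FW := fun w : nat => X `&` [set z0 + t * w%:R].
have mF : forall w, measurable (FW w) by move=> w; apply: measurableI => //; exact: measurable_set1.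
have tF : trivIset setT FW.
  move=> i j _ _ [x [[_ hi] [_ hj]]].
  have : (i%:R : R) = j%:R.
    by apply: (mulfI (lt0r_neq0 t0)); apply: (addrI z0); rewrite -hi -hj.
  by move/eqP; rewrite eqr_nat => /eqP.
have UF : \bigcup_w FW w = X `&` S by rewrite SE setI_bigcupr.
have mU : measurable (\bigcup_w FW w) by rewrite UF; apply: measurableI.
have h := @measure_semi_sigma_additive _ _ _ D FW mF tF mU.
have h2 : (fun n => \sum_(0 <= i < n) D (FW i)) @ \oo --> D X.
  by rewrite DXS -UF; exact: h.
have e : (fun n => \sum_(0 <= i < n) D (FW i)) =
  (fun n => (series (fun w => fine (D [set z0 + t * w%:R]) * \1_X (z0 + t * w%:R)) n)%:E).
  apply/funext => n; rewrite /series /= -sumEFin; apply: eq_bigr => w _.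
  rewrite /FW setI1 indicE; case: ifP => hw.
    by rewrite mulr1 -D_fin //; exact: measurable_set1.
  by rewrite mulr0 measure0.
rewrite e (D_fin _ mX) in h2.
exact: (fine_cvg h2).
Qed.
End Dist.

Theorem theorem3 (R : realType) (d : measure_display) (T : measurableType d)
  (P : probability T R) (eps : {RV P >-> R}) (z0 t : R) (A : set R) :
  0 < t ->
  distribution P eps [set z0 + t * z%:R | z in [set: nat]] = 1%E ->
  (0 < distribution P eps [set z0])%E ->
  measurable A ->
  (exists M : int, forall a : int, A (t * a%:~R) -> a <= M) ->
  let mu : set R -> R := fun B => fine (distribution P eps B) in
  let F : R -> R := fun x => fine (distribution P eps [set x]) in
  let lam : R := (F z0)^-1 in
  let u : int -> R := fun z => (z == 0)%:R - lam * F (z0 + t * z%:~R) in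
  (ereal_sup [set totvar (fun B => PiM (rdirac (- z0)) mu B m) A
              | m in [set: nat]] < +oo)%E /\
  (forall m0 : nat, (forall a : int, A (t * a%:~R) -> a <= m0%:Z) ->
     ((fun m => PiM (rdirac (- z0)) mu A m) @ \oo
        --> lam * PiM (fun B => lam * rdirac (- z0) B) mu A m0) /\
     ((fun n : nat => lam * \sum_(z < n) gammaD u z%:Z * rdirac (t * z%:R) A)
        @ \oo --> lam * PiM (fun B => lam * rdirac (- z0) B) mu A m0)).
Proof.
move=> t0 hS hz0 mA [M hM] mu F lam u.
have mu_ge0 : forall X : set R, measurable X -> 0 <= mu X.
  by move=> X _; apply: fine_ge0; apply: measure_ge0.
have mu_T : mu setT = 1.
  have h : distribution P eps setT = 1%E := probability_setT _.
  by rewrite /mu h.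
have mu_rep := @dist_rep R d T P eps z0 t t0 hS.
have Dle1 : (distribution P eps [set z0] <= 1)%E.
  have h : distribution P eps setT = 1%E := probability_setT _.
  rewrite -h; apply: le_measure; rewrite ?inE //; exact: measurable_set1.
have p0 : 0 < pp R mu z0 t 0.
  rewrite /pp /pt mulr0 addr0 /mu; apply: fine_gt0; rewrite hz0 /=.
  by apply: (le_lt_trans Dle1); rewrite ltry.
have lamE : lam = lamz R mu z0 t by rewrite /lam /F /lamz /pp /pt mulr0 addr0.
have dirE : rdirac (- z0) = etaK R z0 1.
  by apply/funext => B; rewrite /etaK mul1r.
have hneg : forall z : int, (z < 0)%R -> u z = 0.
  move=> z zn; rewrite /u.
  have -> : F (z0 + t * z%:~R) = 0.
    apply: (@mu_off R mu z0 t mu_rep) => w; apply/eqP => e.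
    have : ((Posz w)%:~R : R) = z%:~R.
      by apply: (mulfI (lt0r_neq0 t0)); apply: (addrI z0); rewrite -e.
    move/intr_inj => ez; move: zn; rewrite -ez; lia.
  by rewrite mulr0 subr0 (negbTE (ltr0_neq0 zn)).
have hpos : forall w : nat, u w = nn R mu z0 t (lamz R mu z0 t) w.
  by move=> w; rewrite /u lamE /nn /pp /pt.
split.
  apply: (@le_lt_trans _ _ ((\sum_(z < (absz M).+1) lamz R mu z0 t ^+ z.+1)%:E)); last exact: ltry.
  apply: ge_ereal_sup => _ [m _ <-]; rewrite dirE.
  apply: (@totvar_PiM R mu z0 t t0 mu_rep mu_ge0 mu_T p0 A _ m mA) => z Az.
  have := hM z Az; lia.
move=> m0 hm0.
have hA : forall z : nat, A (t * z%:R) -> (z < m0.+1)%N.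
  move=> z Az; have := hm0 z Az; lia.
rewrite lamE; split.
  rewrite {1}dirE.
  exact: (@PiM_lim R mu z0 t t0 mu_rep mu_ge0 mu_T p0 A m0 mA hA).
exact: (@gamma_lim R mu z0 t t0 mu_rep mu_ge0 mu_T p0 u A m0 hneg hpos mA hA).
Qed.
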